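(* Let $G=(V,E)$ be an entropy-minimal finite simple graph. Then for every nonempty $S\subseteq V$, the bipartite graph $G[c(S),S]$ has no matching saturating $S$.
   Context: For an integer $q \ge 2$ let $[q]=\{0,\dots,q-1\}$. For $f=(f_1,\dots,f_n):[q]^n\to[q]^n$, the interaction graph $\mathrm{IG}(f)$ is the digraph on $\{1,\dots,n\}$ with an arc $(u,v)$ iff $f_v$ depends essentially on $x_u$ (there exist $a,b\in[q]^n$ differing only in coordinate $u$ with $f_v(a)\ne f_v(b)$). A simple graph is viewed as the digraph with both arcs for each edge and no loops. The $q$-guessing number is $\mathrm{gn}(G,q)=\max\{\log_q|\mathrm{Fix}(f)| : \mathrm{IG}(f)\subseteq G\}$ and the entropy is $H(G)=\sup_{q\ge2}\mathrm{gn}(G,q)$. A simple graph $G$ is entropy-minimal if for every simple graph $G'$ with fewer vertices than $G$, $H(G')-\lfloor H(G')\rfloor \ne H(G)-\lfloor H(G)\rfloor$. For nonempty $S\subseteq V$, $c(S)=\{v\in V\setminus S : N(v)\subseteq S\}$, where $N(v)$ is the neighbourhood of $v$. For disjoint $S,T$, $G[S,T]$ is the bipartite graph with parts $S,T$ and the edges of $G$ between $S$ and $T$; a matching saturates $S$ if it covers every vertex of $S$. *)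

(* Defs.v *)
From mathcomp Require Import all_boot.
From Stdlib Require Import Reals.
Set Implicit Arguments. Unset Strict Implicit. Unset Printing Implicit Defensive.

Definition simple_graph (n : nat) (e : rel 'I_n) : Prop :=
  symmetric e /\ irreflexive e.

Definition config (n q : nat) := {ffun 'I_n -> 'I_q}.
Definition netmap (n q : nat) := {ffun config n q -> config n q}.

Definition depends (n q : nat) (f : netmap n q) (u v : 'I_n) : bool :=
  [exists a : config n q, exists b : config n q,
     [forall w : 'I_n, (w != u) ==> (a w == b w)] && (f a v != f b v)].

Definition IG_sub (n q : nat) (e : rel 'I_n) (f : netmap n q) : bool :=
  [forall u : 'I_n, forall v : 'I_n, depends f u v ==> e u v].

Definition Fix (n q : nat) (f : netmap n q) : {set config n q} :=
  [set x | f x == x].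

Definition maxfix (n q : nat) (e : rel 'I_n) : nat :=
  \max_(f : netmap n q | IG_sub e f) #|Fix f|.

Definition gn (n : nat) (e : rel 'I_n) (q : nat) : R :=
  (ln (INR (maxfix q e)) / ln (INR q))%R.

Definition is_entropy (n : nat) (e : rel 'I_n) (h : R) : Prop :=
  is_lub (fun x => exists q : nat, (2 <= q)%N /\ x = gn e q) h.

Definition entropy_minimal (n : nat) (e : rel 'I_n) : Prop :=
  forall (m : nat) (e' : rel 'I_m), (m < n)%N -> simple_graph e' ->
  forall h h' : R, is_entropy e h -> is_entropy e' h' ->
  frac_part h' <> frac_part h.

Definition cset (n : nat) (e : rel 'I_n) (S : {set 'I_n}) : {set 'I_n} :=
  [set v | (v \notin S) && [forall u, e v u ==> (u \in S)]].

Definition bip_matching (n : nat) (e : rel 'I_n) (S T : {set 'I_n})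
  (M : {set 'I_n * 'I_n}) : Prop :=
  (forall p, p \in M -> [/\ p.1 \in S, p.2 \in T & e p.1 p.2]) /\
  (forall p p', p \in M -> p' \in M -> p != p' ->
     [disjoint [set p.1; p.2] & [set p'.1; p'.2]]).

Definition saturates (n : nat) (M : {set 'I_n * 'I_n}) (S : {set 'I_n}) : Prop :=
  forall s, s \in S -> exists2 p, p \in M & s \in [set p.1; p.2].

(* Main.v *)
Require Import Defs.
From mathcomp Require Import all_boot.
From Stdlib Require Import Reals Lra.
Set Implicit Arguments. Unset Strict Implicit. Unset Printing Implicit Defensive.

Lemma INR_muln a b : INR (muln a b) = (INR a * INR b)%R.
Proof. by rewrite -mult_INR. Qed.

Lemma INR_expn a k : INR (expn a k) = (INR a ^ k)%R.
Proof. elim: k => [|k IH]; first by rewrite expn0. by rewrite expnS INR_muln IH. Qed.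

Lemma ln_le' x y : (0 < x)%R -> (x <= y)%R -> (ln x <= ln y)%R.
Proof.
move=> x0 [H|->]; last by apply: Rle_refl.
by apply: Rlt_le; apply: ln_increasing.
Qed.

Lemma INR_pos a : leq 1 a -> (0 < INR a)%R.
Proof. by move=> /ltP /lt_INR. Qed.

Lemma lnq_pos q : leq 2 q -> (0 < ln (INR q))%R.
Proof.
move=> q2; rewrite -ln_1; apply: ln_increasing; first by apply: Rlt_0_1.
have: lt 1 q by apply/ltP.
by move/lt_INR.
Qed.

Lemma gn_shift n m (e : rel 'I_n) (e' : rel 'I_m) k q : leq 2 q ->
  leq 1 (maxfix q e') ->
  maxfix q e = muln (expn q k) (maxfix q e') -> gn e q = (INR k + gn e' q)%R.
Proof.
move=> q2 Mp Hm; have q0 : leq 1 q by apply: leq_trans q2.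
have M0 := INR_pos Mp.
have Q0 := INR_pos q0.
have L := lnq_pos q2.
rewrite /gn Hm INR_muln INR_expn ln_mult // ?ln_pow //; last exact: pow_lt.
field; by apply: Rgt_not_eq.
Qed.

Lemma gn_le n (e : rel 'I_n) q : leq 2 q -> leq 1 (maxfix q e) ->
  leq (maxfix q e) (expn q n) -> (gn e q <= INR n)%R.
Proof.
move=> q2 Mp Mle; have q0 : leq 1 q by apply: leq_trans q2.
have M0 := INR_pos Mp.
have Q0 := INR_pos q0.
have L := lnq_pos q2.
rewrite /gn.
apply: (Rmult_le_reg_r (ln (INR q))) => //.
rewrite /Rdiv Rmult_assoc Rinv_l; last by apply: Rgt_not_eq.
rewrite Rmult_1_r -ln_pow //.
apply: ln_le' => //; rewrite -INR_expn; apply: le_INR; apply/leP; exact: Mle.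
Qed.

Lemma frac_shift h k : frac_part (h + INR k) = frac_part h.
Proof.
have [Hb1 Hb2] := base_fp h.
have := @Int_part_frac_part_spec (h + INR k) (Int_part h + Z.of_nat k) (frac_part h).
case => //.
  split; [by apply: Rge_le | by []].
rewrite plus_IZR -INR_IZR_INZ {1}(Rplus_Int_part_frac_part h); ring.
Qed.

Lemma entropy_exists n (e : rel 'I_n) :
  (forall q, leq 2 q -> (gn e q <= INR n)%R) -> exists h, is_entropy e h.
Proof.
move=> Hb.
have Hbd : bound (fun x => exists q : nat, leq 2 q /\ x = gn e q).
  exists (INR n) => x [q [q2 ->]]; exact: Hb.
have Hne : exists x, (fun x => exists q : nat, leq 2 q /\ x = gn e q) x.
  by exists (gn e 2); exists 2.
case: (completeness _ Hbd Hne) => h Hh; by exists h.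
Qed.

Lemma entropy_shift n m (e : rel 'I_n) (e' : rel 'I_m) k h' :
  (forall q, leq 2 q -> gn e q = (INR k + gn e' q)%R) ->
  is_entropy e' h' -> is_entropy e (h' + INR k).
Proof.
move=> Hs [Hu Hl]; split.
- move=> x [q [q2 ->]]; rewrite Hs // Rplus_comm; apply: Rplus_le_compat_r.
  by apply: Hu; exists q.
- move=> b Hb.
  have: (h' <= b - INR k)%R.
    apply: Hl => x [q [q2 ->]].
    have : (gn e q <= b)%R by apply: Hb; exists q.
    rewrite Hs //; lra.
  lra.
Qed.

From mathcomp Require Import all_boot.

Lemma dependsP n q (f : netmap n q) u v :
  reflect (exists a b : config n q, (forall w, w != u -> a w = b w) /\ f a v != f b v)
          (depends f u v).
Proof.
apply: (iffP idP).
- case/existsP=> a /existsP [b /andP [/forallP H Hne]].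
  exists a, b; split=> // w wu; exact/eqP/(implyP (H w)).
- case=> a [b [H Hne]]; apply/existsP; exists a; apply/existsP; exists b.
  apply/andP; split=> //; apply/forallP=> w; apply/implyP=> wu; exact/eqP/H.
Qed.

Lemma ndep n q (f : netmap n q) u v (a b : config n q) :
  ~~ depends f u v -> (forall w, w != u -> a w = b w) -> f a v = f b v.
Proof.
move=> nd H; apply/eqP; apply/negPn/negP=> Hne; move/negP: nd; apply.
by apply/dependsP; exists a, b.
Qed.

Lemma dep_local n q (f : netmap n q) v (P : pred 'I_n) :
  (forall u, ~~ P u -> ~~ depends f u v) ->
  forall a b : config n q, (forall u, P u -> a u = b u) -> f a v = f b v.
Proof.
move=> HP; suff: forall k (a b : config n q), #|[set u | a u != b u]| <= k ->
   (forall u, P u -> a u = b u) -> f a v = f b v.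
  by move=> H a b; apply: (H _ a b (leqnn _)).
elim=> [|k IH] a b.
- rewrite leqn0 cards_eq0 => /eqP H0 _.
  have -> : a = b.
    apply/ffunP=> u; apply/eqP; case: (boolP (a u == b u)) => // Hu.
    have: u \in [set u | a u != b u] by rewrite inE.
    by rewrite H0 inE.
  by [].
- move=> Hk Hab.
  case: (boolP (a == b)) => [/eqP -> //|/eqP nab].
  have [u Hu]: exists u, a u != b u.
    apply/existsP; case: (boolP [exists u, a u != b u]) => // H.
    exfalso; apply: nab; apply/ffunP=> u; apply/eqP.
    by move: H; rewrite negb_exists => /forallP /(_ u) /negPn.
  pose a' : config n q := [ffun w => if w == u then b u else a w].
  have nPu : ~~ P u by apply/negP=> Pu; move/eqP: Hu; apply; apply: Hab.
  have -> : f a v = f a' v.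
    apply: ndep (HP _ nPu) _ => w wu; by rewrite ffunE (negbTE wu).
  apply: IH; last first.
    move=> w Pw; rewrite ffunE; case: eqP=> [->//|_]; exact: Hab.
  have : [set w | a' w != b w] \subset [set w | a w != b w] :\ u.
    apply/subsetP=> w; rewrite !inE ffunE.
    by case: (w =P u) => [->|_]; rewrite ?eqxx.
  move/subset_leq_card; rewrite (cardsD1 u) inE Hu add1n in Hk.
  move=> H; apply: leq_trans H _; by [].
Qed.

Definition subrel n (e : rel 'I_n) (W : {set 'I_n}) : rel 'I_#|W| :=
  fun i j => e (enum_val i) (enum_val j).
Arguments subrel [n] e W.

Lemma maxfix_ge n q (e : rel 'I_n) (f : netmap n q) : IG_sub e f -> #|Fix f| <= maxfix q e.
Proof. move=> H; rewrite /maxfix. exact: (@leq_bigmax_cond _ (fun f0 => IG_sub e f0) (fun f0 => #|Fix f0|) f H). Qed.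

Lemma card_slices n q k (A : {set config n q}) (h : config n q -> config k q) :
  #|A| = \sum_(y : config k q) #|[set x in A | h x == y]|.
Proof.
rewrite -sum1_card (partition_big h xpredT) //=.
apply: eq_bigr=> y _; rewrite -sum1_card; apply: eq_bigl=> x; by rewrite inE.
Qed.

Lemma upper n q (e : rel 'I_n) (S : {set 'I_n}) s0 w0 (Hs0 : s0 \in S) (Hw0 : w0 \in ~: S) :
  maxfix q e <= q ^ #|S| * maxfix q (subrel e (~: S)).
Proof.
apply/bigmax_leqP=> f Hf.
set W := ~: S; set m := #|W|; set k := #|S|.
pose rS := enum_rank_in Hs0; pose rW := enum_rank_in Hw0.
pose vS := fun i : 'I_k => (enum_val i : 'I_n).
pose vW := fun i : 'I_m => (enum_val i : 'I_n).
have vSK : forall i, rS (vS i) = i by move=> i; apply: enum_valK_in.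
have vWK : forall i, rW (vW i) = i by move=> i; apply: enum_valK_in.
have rSK : forall v, v \in S -> vS (rS v) = v by move=> v Hv; apply: enum_rankK_in.
have rWK : forall v, v \in W -> vW (rW v) = v by move=> v Hv; apply: enum_rankK_in.
have vSin : forall i, vS i \in S by move=> i; apply: enum_valP.
have vWin : forall i, vW i \in W by move=> i; apply: enum_valP.
pose resS (x : config n q) : config k q := [ffun i => x (vS i)].
pose resW (x : config n q) : config m q := [ffun i => x (vW i)].
pose ext (y : config k q) (z : config m q) : config n q :=
  [ffun v => if v \in S then y (rS v) else z (rW v)].
have ext_res : forall x, ext (resS x) (resW x) = x.
  move=> x; apply/ffunP=> v; rewrite !ffunE; case: ifP=> Hv; rewrite ?ffunE.
    by rewrite rSK.
  by rewrite rWK // inE Hv.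
pose g (y : config k q) : netmap m q := [ffun z => [ffun j => f (ext y z) (vW j)]].
have Hg : forall y, IG_sub (subrel e W) (g y).
  move=> y; apply/forallP=> u; apply/forallP=> v; apply/implyP.
  case/dependsP=> a [b [Hab Hne]].
  have: depends f (vW u) (vW v).
    apply/dependsP; exists (ext y a), (ext y b); split.
      move=> w wu; rewrite !ffunE; case: ifP=> // Hw; apply: Hab.
      apply: contra wu => /eqP <-; by rewrite rWK // inE Hw.
    by move: Hne; rewrite !ffunE.
  by move=> Hd; have := forallP (forallP Hf (vW u)) (vW v); rewrite Hd.
rewrite (card_slices _ resS).
apply: (@leq_trans (\sum_(y : config k q) maxfix q (subrel e W))); last first.
  rewrite (eq_bigl (fun y => y \in predT)) // sum_nat_const.
  by rewrite card_ffun !card_ord.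
apply: leq_sum=> y _.
apply: leq_trans (maxfix_ge (Hg y)).
have <- : #|[set resW x | x in [set x in Fix f | resS x == y]]| =
          #|[set x in Fix f | resS x == y]|.
  apply: card_in_imset=> x1 x2; rewrite !inE => /andP [_ /eqP H1] /andP [_ /eqP H2] H.
  by rewrite -(ext_res x1) -(ext_res x2) H H1 H2.
apply: subset_leq_card; apply/subsetP=> z /imsetP [x]; rewrite !inE => /andP [/eqP Hx /eqP Hy] ->.
apply/eqP/ffunP=> j; rewrite !ffunE -Hy ext_res.
by rewrite Hx.
Qed.

Lemma maxfix_attained n q (e : rel 'I_n) : 0 < q ->
  exists2 f : netmap n q, IG_sub e f & maxfix q e = #|Fix f|.
Proof.
move=> q0.
pose c : config n q := [ffun _ => Ordinal q0].
pose f0 : netmap n q := [ffun _ => c].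
have Hf0 : IG_sub e f0.
  apply/forallP=> u; apply/forallP=> v; apply/implyP; case/dependsP=> a [b [_]].
  by rewrite !ffunE eqxx.
have H : 0 < #|[pred f : netmap n q | IG_sub e f]|.
  by apply/card_gt0P; exists f0.
case: (eq_bigmax_cond (fun f : netmap n q => #|Fix f|) H) => f Hf Hm.
by exists f => //; rewrite /maxfix; exact: Hm.
Qed.

Lemma csetP n (e : rel 'I_n) S t : t \in cset e S -> t \notin S /\ (forall u, e t u -> u \in S).
Proof. rewrite inE => /andP [tS /forallP H]; split=> // u; exact/implyP. Qed.

Lemma lower n q (e : rel 'I_n) (S : {set 'I_n}) (mu : 'I_n -> 'I_n) s0
  (Hs0 : s0 \in S) (Hw0 : mu s0 \in ~: S) :
  simple_graph e -> 0 < q ->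
  (forall s, s \in S -> mu s \in cset e S) ->
  (forall s, s \in S -> e s (mu s)) ->
  {in S &, injective mu} ->
  q ^ #|S| * maxfix q (subrel e (~: S)) <= maxfix q e.
Proof.
move=> [esym eirr] q0 Hmuc Hmue Hmui.
set W := ~: S; set m := #|W|; set k := #|S|.
have [f' Hf' ->] := maxfix_attained (subrel e W) q0.
pose rS := enum_rank_in Hs0; pose rW := enum_rank_in Hw0.
pose vS := fun i : 'I_k => (enum_val i : 'I_n).
pose vW := fun i : 'I_m => (enum_val i : 'I_n).
have vSK : forall i, rS (vS i) = i by move=> i; apply: enum_valK_in.
have vWK : forall i, rW (vW i) = i by move=> i; apply: enum_valK_in.
have rSK : forall v, v \in S -> vS (rS v) = v by move=> v Hv; apply: enum_rankK_in.
have rWK : forall v, v \in W -> vW (rW v) = v by move=> v Hv; apply: enum_rankK_in.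
have vSin : forall i, vS i \in S by move=> i; apply: enum_valP.
have vWin : forall i, vW i \in W by move=> i; apply: enum_valP.
have vWS : forall i, vW i \notin S by move=> i; have := vWin i; rewrite inE.
pose resS (x : config n q) : config k q := [ffun i => x (vS i)].
pose resW (x : config n q) : config m q := [ffun i => x (vW i)].
pose T := mu @: S.
pose nu t := odflt t [pick s in S | mu s == t].
have nuK : forall s, s \in S -> nu (mu s) = s.
  move=> s Hs; rewrite /nu; case: pickP => [s' /andP [Hs' /eqP Hm]|/(_ s)]; last by rewrite Hs eqxx.
  by apply: Hmui.
have nuT : forall t, t \in T -> nu t \in S /\ mu (nu t) = t.
  by move=> t /imsetP [s Hs ->]; rewrite nuK.
have TS : forall t, t \in T -> t \notin S /\ (forall u, e t u -> u \in S).
  by move=> t /imsetP [s Hs ->]; apply: csetP; apply: Hmuc.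
pose f : netmap n q := [ffun x : config n q => [ffun v => if v \in S then x (mu v)
   else if v \in T then x (nu v) else f' (resW x) (rW v)]].
have Hf : IG_sub e f.
  apply/forallP=> u; apply/forallP=> v; apply/implyP; case/dependsP=> a [b [Hab]].
  rewrite !ffunE; case: ifP => vS'.
    case: (mu v =P u) => [<- _|/eqP H]; last by rewrite Hab // eqxx.
    by rewrite esym; apply: Hmue.
  case: ifP => vT.
    case: (nu v =P u) => [<- _|/eqP H]; last by rewrite Hab // eqxx.
    have [H1 H2] := nuT v vT; rewrite -{2}H2; exact: Hmue.
  case: (boolP (u \in S)) => uS Hne.
    have: resW a = resW b.
      apply/ffunP=> j; rewrite !ffunE; apply: Hab; apply: contraNneq (vWS j) => ->; done.
    by move=> H; rewrite H eqxx in Hne.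
  have uW : u \in W by rewrite inE.
  have vW' : v \in W by rewrite inE vS'.
  have: depends f' (rW u) (rW v).
    apply/dependsP; exists (resW a), (resW b); split=> // j ju; rewrite !ffunE.
    apply: Hab; apply: contra ju => /eqP <-; by rewrite vWK.
  move=> Hd; have := implyP (forallP (forallP Hf' (rW u)) (rW v)) Hd.
  by rewrite /subrel -/(vW _) -/(vW _) !rWK.
have ndT : forall u j, vW u \in T -> vW j \notin S -> ~~ depends f' u j.
  move=> u j uT jS; apply/negP=> Hd.
  have := implyP (forallP (forallP Hf' u) j) Hd; rewrite /subrel -/(vW _) -/(vW _).
  by move/((TS _ uT).2); rewrite (negbTE jS).
apply: leq_trans (maxfix_ge Hf).
rewrite (card_slices _ resS).
apply: (@leq_trans (\sum_(y : config k q) #|Fix f'|)).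
  rewrite (eq_bigl (fun y => y \in predT)) // sum_nat_const.
  by rewrite card_ffun !card_ord.
apply: leq_sum=> y _.
pose X (z : config m q) : config n q := [ffun v => if v \in S then y (rS v)
   else if v \in T then y (rS (nu v)) else z (rW v)].
have <- : #|[set X z | z in Fix f']| = #|Fix f'|.
  apply: card_in_imset=> z1 z2; rewrite !inE => /eqP H1 /eqP H2 H.
  apply/ffunP=> j.
  case: (boolP (vW j \in T)) => jT.
    rewrite -H1 -H2; apply: (@dep_local _ _ _ _ pred0) => // u _.
    apply/negP=> Hd.
    have := implyP (forallP (forallP Hf' u) j) Hd; rewrite /subrel -/(vW _) -/(vW _).
    rewrite esym => /((TS _ jT).2); by rewrite (negbTE (vWS u)).
  have := congr1 (fun x : config n q => x (vW j)) H; rewrite /= !ffunE (negbTE (vWS j)) (negbTE jT).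
  by rewrite vWK.
apply: subset_leq_card; apply/subsetP=> x /imsetP [z]; rewrite inE => /eqP Hz ->.
rewrite !inE; apply/andP; split; last first.
  apply/eqP/ffunP=> i; rewrite !ffunE vSin vSK //.
apply/eqP/ffunP=> v; rewrite !ffunE.
case: ifP => vS'.
  have muT : mu v \in T by apply: imset_f.
  by rewrite (negbTE (TS _ muT).1) muT nuK.
case: ifP => vT.
  by rewrite (nuT v vT).1.
have vW' : v \in W by rewrite inE vS'.
rewrite -{2}Hz.
apply: (@dep_local _ _ _ _ (fun u => vW u \notin T)).
  move=> u; rewrite negbK => uT; apply: ndT => //; rewrite rWK //.
move=> u uT; rewrite !ffunE (negbTE (vWS u)) (negbTE uT) vWK //.
Qed.

Lemma maxfix_pos n q (e : rel 'I_n) : 0 < q -> 0 < maxfix q e.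
Proof.
move=> q0.
pose c : config n q := [ffun _ => Ordinal q0].
pose f0 : netmap n q := [ffun _ => c].
have Hf0 : IG_sub e f0.
  apply/forallP=> u; apply/forallP=> v; apply/implyP; case/dependsP=> a [b [_]].
  by rewrite !ffunE eqxx.
apply: leq_trans (maxfix_ge Hf0); apply/card_gt0P; exists c; by rewrite inE ffunE.
Qed.

Lemma maxfix_le n q (e : rel 'I_n) : maxfix q e <= q ^ n.
Proof.
apply/bigmax_leqP=> f _; apply: leq_trans (max_card _) _.
by rewrite card_ffun !card_ord.
Qed.

Theorem lemma3 (n : nat) (e : rel 'I_n) :
  simple_graph e -> entropy_minimal e ->
  forall S : {set 'I_n}, S != set0 ->
  ~ (exists M : {set 'I_n * 'I_n},
       bip_matching e S (cset e S) M /\ saturates M S).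
Proof.
move=> Hsg Hmin S SN [M [[HM1 HM2] Hsat]].
have [s0 Hs0] := set0Pn _ SN.
pose mu s := if [pick p in M | p.1 == s] is Some p then p.2 else s.
have Hmu : forall s, s \in S -> exists2 p, p \in M & (p.1 = s /\ mu s = p.2).
  move=> s Hs; rewrite /mu; case: pickP => [p /andP [pM /eqP p1]|Hn]; first by exists p.
  exfalso; case: (Hsat s Hs) => p pM; rewrite !inE => /orP [/eqP sp|/eqP sp].
    by have := Hn p; rewrite pM sp eqxx.
  have [_ p2 _] := HM1 p pM; have [p2S _] := csetP p2; by rewrite -sp Hs in p2S.
have Hmuc : forall s, s \in S -> mu s \in cset e S.
  by move=> s Hs; case: (Hmu s Hs) => p pM [_ ->]; case: (HM1 p pM).
have Hmue : forall s, s \in S -> e s (mu s).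
  by move=> s Hs; case: (Hmu s Hs) => p pM [<- ->]; case: (HM1 p pM).
have Hmui : {in S &, injective mu}.
  move=> s1 s2 H1 H2 E; case: (Hmu s1 H1) => p1 p1M [P1 E1]; case: (Hmu s2 H2) => p2 p2M [P2 E2].
  have E' : p1.2 = p2.2 by rewrite -E1 -E2 E.
  case: (p1 =P p2) => [pe|/eqP ne]; first by rewrite -P1 -P2 pe.
  have := HM2 _ _ p1M p2M ne; rewrite disjoints_subset => /subsetP /(_ p1.2).
  rewrite !inE eqxx orbT => /(_ isT); by rewrite E' eqxx orbT.
have Hw0 : mu s0 \in ~: S by rewrite inE; exact: (csetP (Hmuc s0 Hs0)).1.
set e' := subrel e (~: S).
have Heq : forall q, 2 <= q -> maxfix q e = q ^ #|S| * maxfix q e'.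
  move=> q q2; apply/eqP; rewrite eqn_leq; apply/andP; split.
    exact: upper Hs0 Hw0.
  by apply: lower Hs0 Hw0 Hsg _ Hmuc Hmue Hmui; apply: leq_trans q2.
have Hsg' : simple_graph e'.
  split; first by move=> i j; rewrite /e' /subrel; apply: Hsg.1.
  by move=> i; rewrite /e' /subrel; apply: Hsg.2.
have Hmn : #|~: S| < n.
  have H : #|~: S| < #|S| + #|~: S|.
    by rewrite -{1}(add0n #|~: S|) ltn_add2r card_gt0.
  by move: H; rewrite cardsC card_ord.
have [h' Hh'] : exists h', is_entropy e' h'.
  apply: entropy_exists => q q2; apply: gn_le => //.
    by apply: maxfix_pos; apply: leq_trans q2.
  exact: maxfix_le.
have Hh : is_entropy e (h' + INR #|S|).
  apply: entropy_shift Hh' => q q2; apply: gn_shift => //.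
    by apply: maxfix_pos; apply: leq_trans q2.
  exact: Heq.
exact: (Hmin _ e' Hmn Hsg' _ _ Hh Hh' (esym (frac_shift h' #|S|))).
Qed.
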